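(* If $\mathbb{K}$ is an infinite field of characteristic $p>2$, then $I_p\subseteq T_2(E_{0^*}\otimes E_0)$.
   Context: $E$ is the Grassmann algebra of a vector space with countable basis $e_1,e_2,\dots$ (generated by the $e_i$ with $e_ie_j=-e_je_i$), with canonical $\mathbb{Z}_2$-grading $E=E^{(0)}\oplus E^{(1)}$ (even/odd length monomials). $A=E\otimes E$ has the $\mathbb{Z}_2\times\mathbb{Z}_2$-grading $A_{(a,b)}=E^{(a)}\otimes E^{(b)}$. $E_{0^*}\otimes E_0$ denotes $A$ with the $\mathbb{Z}_2$-grading $A_0=A_{(0,0)}\oplus A_{(1,0)}$, $A_1=A_{(0,1)}\oplus A_{(1,1)}$. $\mathbb{K}\langle Y\cup Z\rangle$ is the free associative algebra on disjoint countable sets $Y=\{y_1,\dots\}$ (degree $0$) and $Z=\{z_1,\dots\}$ (degree $1$). $T_2(A)$ is the set of $\mathbb{Z}_2$-graded identities: polynomials vanishing under every substitution of the $y_i$ by elements of $A_0$ and the $z_i$ by elements of $A_1$. A $T_2$-ideal is an ideal stable under all graded endomorphisms (sending $y_i$ to degree-$0$ and $z_i$ to degree-$1$ polynomials). Notation: $[a,b]=ab-ba$, $[a_1,\dots,a_n]=[[a_1,\dots,a_{n-1}],a_n]$, $a\circ b=ab+ba$. $I_p$ is the $T_2$-ideal generated by: (1) $[y_1,y_2,y_3]$, $[y_1,y_2,z_3]$; (2) $[y_1,z_2,y_3]$; (3) $[y_1,z_2]\circ z_3$; (4) $[z_1\circ z_2,z_3]$; (5) $(z_1\circ z_2)(z_3\circ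 z_4)-(z_1\circ z_3)(z_2\circ z_4)$; (6) $[x_1,y_2][y_3,x_4]+[x_1,y_3][y_2,x_4]$ for all choices $x_1\in\{y_1,z_1\}$, $x_4\in\{y_4,z_4\}$; (7) $[y_1,z_2](z_3\circ z_4)-[y_1,z_3](z_2\circ z_4)$; (8) $[y_1,z_1]\cdots[y_{2k-2},z_1](z_2\circ z_1)z_1^{2n}$ and (9) $[y_1,z_1]\cdots[y_{2k-1},z_1]z_1^{2n}$, for all integers $k\ge1$, $n\ge0$ with $2n+2k-1=p$. *)

(* Defs.v *)
From HB Require Import structures.
From mathcomp Require Import all_boot all_order all_algebra.
Set Implicit Arguments. Unset Strict Implicit. Unset Printing Implicit Defensive.
Import Order.TTheory GRing.Theory Num.Theory.
Local Open Scope ring_scope.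

Section Defs.
Variable K : fieldType.

(* The free associative algebra K<Y u Z>.                             *)
(* A variable is (b, i): b = false means y_i (degree 0),               *)
(*                        b = true  means z_i (degree 1).              *)
(* Elements are formal K-linear combinations of words, i.e. lists of   *)
(* (coefficient, word); two formal sums denote the same element iff    *)
(* their coefficient functions agree ([fpeq]).                         *)
Definition fvarT := (bool * nat)%type.
Definition fword := seq fvarT.
Definition fpoly := seq (K * fword).

Definition fcoef (p : fpoly) (w : fword) : K := \sum_(m <- p | m.2 == w) m.1.
Definition fpeq (p q : fpoly) : Prop := forall w, fcoef p w = fcoef q w.

Definition fzero : fpoly := [::].
Definition fone : fpoly := [:: (1, [::])].
Definition fvar (v : fvarT) : fpoly := [:: (1, [:: v])].
Definition fadd (p q : fpoly) : fpoly := p ++ q.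
Definition fscale (c : K) (p : fpoly) : fpoly := [seq (c * m.1, m.2) | m <- p].
Definition fsub (p q : fpoly) : fpoly := fadd p (fscale (-1) q).
Definition fmul (p q : fpoly) : fpoly :=
  [seq (a.1 * b.1, a.2 ++ b.2) | a <- p, b <- q].
Definition fprod (ps : seq fpoly) : fpoly := foldr fmul fone ps.

Definition y (i : nat) : fpoly := fvar (false, i).
Definition z (i : nat) : fpoly := fvar (true, i).
Definition fcomm (a b : fpoly) : fpoly := fsub (fmul a b) (fmul b a).
Definition fcirc (a b : fpoly) : fpoly := fadd (fmul a b) (fmul b a).

Definition wdeg (w : fword) : bool := odd (count fst w).
(* p is homogeneous of degree d (the zero polynomial is homogeneous of any degree). *)
Definition fhomog (p : fpoly) (d : bool) : Prop :=
  forall w, fcoef p w != 0 -> wdeg w = d.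

Definition fsubst (s : fvarT -> fpoly) (p : fpoly) : fpoly :=
  flatten [seq fscale m.1 (fprod (map s m.2)) | m <- p].
Definition graded_endo (s : fvarT -> fpoly) : Prop :=
  forall v, fhomog (s v) v.1.

Definition isT2ideal (J : fpoly -> Prop) : Prop :=
     (forall p q, fpeq p q -> J p -> J q)
  /\ J fzero
  /\ (forall p q, J p -> J q -> J (fadd p q))
  /\ (forall c p, J p -> J (fscale c p))
  /\ (forall p q, J p -> J (fmul q p) /\ J (fmul p q))
  /\ (forall s p, graded_endo s -> J p -> J (fsubst s p)).

Definition Ip_gens (p : nat) (g : fpoly) : Prop :=
     g = fcomm (fcomm (y 1) (y 2)) (y 3)
  \/ g = fcomm (fcomm (y 1) (y 2)) (z 3)
  \/ g = fcomm (fcomm (y 1) (z 2)) (y 3)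
  \/ g = fcirc (fcomm (y 1) (z 2)) (z 3)
  \/ g = fcomm (fcirc (z 1) (z 2)) (z 3)
  \/ g = fsub (fmul (fcirc (z 1) (z 2)) (fcirc (z 3) (z 4)))
              (fmul (fcirc (z 1) (z 3)) (fcirc (z 2) (z 4)))
  \/ (exists b1 b4 : bool,
        g = fadd (fmul (fcomm (fvar (b1, 1%N)) (y 2)) (fcomm (y 3) (fvar (b4, 4%N))))
                 (fmul (fcomm (fvar (b1, 1%N)) (y 3)) (fcomm (y 2) (fvar (b4, 4%N)))))
  \/ g = fsub (fmul (fcomm (y 1) (z 2)) (fcirc (z 3) (z 4)))
              (fmul (fcomm (y 1) (z 3)) (fcirc (z 2) (z 4)))
  \/ (exists k n : nat, [/\ (1 <= k)%N, (2 * n + 2 * k - 1)%N = p &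
        g = fmul (fprod [seq fcomm (y i) (z 1) | i <- iota 1 (2 * k - 2)])
                 (fmul (fcirc (z 2) (z 1)) (fprod (nseq (2 * n) (z 1))))])
  \/ (exists k n : nat, [/\ (1 <= k)%N, (2 * n + 2 * k - 1)%N = p &
        g = fmul (fprod [seq fcomm (y i) (z 1) | i <- iota 1 (2 * k - 1)])
                 (fprod (nseq (2 * n) (z 1)))]).

Definition in_Ip (p : nat) (f : fpoly) : Prop :=
  forall J, isT2ideal J -> (forall g, Ip_gens p g -> J g) -> J f.

(* The Grassmann algebra E (basis e_i, i : nat) and A = E (x) E.       *)
(* A word u : seq nat stands for the product e_{u_1} ... e_{u_k};      *)
(* it equals esign u * e_{sort u}, where esign u = 0 if u has a        *)
(* repeated index and (-1)^(#inversions of u) otherwise.               *)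
(* Elements of A are formal sums of (c, (u, v)) standing for           *)
(* c * (e_u (x) e_v); the coefficient on the basis element             *)
(* e_S (x) e_T (S, T strictly increasing) is [acoef x S T].            *)
Fixpoint ninv (w : seq nat) : nat :=
  match w with
  | [::] => 0
  | a :: s => (count (fun b => b < a) s + ninv s)%N
  end.
Definition esign (w : seq nat) : K := if uniq w then (-1) ^+ ninv w else 0.

Definition aform := seq (K * (seq nat * seq nat)).
Definition acoef (x : aform) (S T : seq nat) : K :=
  \sum_(m <- x | (sort leq m.2.1 == S) && (sort leq m.2.2 == T))
     m.1 * esign m.2.1 * esign m.2.2.
Definition azero (x : aform) : Prop := forall S T, acoef x S T = 0.

Definition aone : aform := [:: (1, ([::], [::]))].
(* (a (x) b)(c (x) d) = ac (x) bd *)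
Definition amul (x x' : aform) : aform :=
  [seq (a.1 * b.1, (a.2.1 ++ b.2.1, a.2.2 ++ b.2.2)) | a <- x, b <- x'].

(* The Z_2-grading of E_{0*} (x) E_0: degree given by the parity of the
   length in the second tensor factor. *)
Definition A0 (x : aform) : Prop := forall S T, odd (size T) -> acoef x S T = 0.
Definition A1 (x : aform) : Prop := forall S T, ~~ odd (size T) -> acoef x S T = 0.

Definition graded_assign (phi : fvarT -> aform) : Prop :=
  forall v, if v.1 then A1 (phi v) else A0 (phi v).

Definition aeval (phi : fvarT -> aform) (f : fpoly) : aform :=
  flatten [seq [seq (m.1 * a.1, a.2) | a <- foldr amul aone (map phi m.2)]
          | m <- f].

Definition T2_E0sE0 (f : fpoly) : Prop :=
  forall phi, graded_assign phi -> azero (aeval phi f).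

End Defs.

(* Main.v *)
Require Import Defs.
From HB Require Import structures.
From mathcomp Require Import all_boot all_order all_algebra.
From mathcomp Require Import zify ring.
Set Implicit Arguments. Unset Strict Implicit. Unset Printing Implicit Defensive.
Import GRing.Theory.
Local Open Scope ring_scope.

Definition cross (a b : seq nat) : nat :=
  sumn [seq count (fun y => (y < x)%N) b | x <- a].

Lemma ninv_cat a b : ninv (a ++ b) = (ninv a + ninv b + cross a b)%N.
Proof.
elim: a => [|x a IH] /=; first by rewrite /cross /=; lia.
rewrite /cross /= -/(cross a b) IH count_cat; lia.
Qed.

Lemma cross_perml a a' b : perm_eq a a' -> cross a b = cross a' b.
Proof. by move=> h; apply: perm_sumn; apply: perm_map. Qed.

Lemma cross_permr a b b' : perm_eq b b' -> cross a b = cross a b'.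
Proof.
move/permP=> h; rewrite /cross; congr sumn; apply: eq_map => x; exact: h.
Qed.

Lemma ninv_sorted s : sorted leq s -> ninv s = 0%N.
Proof.
elim: s => [|x s IH] //= hp.
rewrite IH ?(path_sorted hp) // addn0.
have := order_path_min leq_trans hp.
by move/allP=> h; apply/eqP; rewrite -leqn0 leqNgt -has_count; apply/hasP => -[y /h]; rewrite leqNgt => /negbTE ->.
Qed.

Lemma cross_swap a b : uniq (a ++ b) -> (cross a b + cross b a = size a * size b)%N.
Proof.
elim: a => [|x a IH] /=.
  by move=> _; rewrite /cross /=; elim: b => //= y b; rewrite /cross /=.
move=> /andP[xa ub].
have IH' := IH ub.
have e1 : cross (x :: a) b = (count (fun y => (y < x)%N) b + cross a b)%N by [].
have e2 : forall b', cross b' (x :: a) = (count (fun y => (x < y)%N) b' + cross b' a)%N.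
  elim=> [|y b' IHb] //=; rewrite /cross /= -/(cross b' (x::a)) -/(cross b' a) IHb; lia.
rewrite e1 e2.
have : (count (fun y => (y < x)%N) b + count (fun y => (x < y)%N) b = size b)%N.
  have xnb : x \notin b by move: xa; rewrite mem_cat negb_or => /andP[].
  clear -xnb; elim: b xnb => [|y b IHb] //=; rewrite inE negb_or => /andP[xy /IHb].
  case: (ltngtP y x) => //= [_|_|e]; last by rewrite e eqxx in xy.
  - lia. - lia.
by move=> h; rewrite mulSn -IH' -h addnACA.
Qed.

Section Sign.
Variable K : fieldType.
Local Notation esign := (@esign K).

Lemma esign_nuniq w : ~~ uniq w -> esign w = 0.
Proof. by rewrite /Defs.esign => /negbTE ->. Qed.

Lemma esign_sort u : esign (sort leq u) = (uniq u)%:R.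
Proof.
rewrite /Defs.esign sort_uniq; case: (uniq u) => //.
by rewrite ninv_sorted ?expr0 // sort_sorted //; exact: leq_total.
Qed.

Lemma uniq_perm_cat (u u' w : seq nat) : perm_eq u u' -> uniq (u ++ w) = uniq (u' ++ w).
Proof. by move=> h; apply: perm_uniq; rewrite perm_cat2r. Qed.

Lemma esign_catl u w : esign (u ++ w) = esign u * esign (sort leq u ++ w).
Proof.
rewrite /Defs.esign.
have hp : perm_eq u (sort leq u) by rewrite perm_sym perm_sort.
rewrite -(uniq_perm_cat w hp).
case hu: (uniq (u ++ w)); last by case: (uniq u); rewrite ?mul0r ?mulr0.
have := hu; rewrite cat_uniq => /andP[-> _].
rewrite !ninv_cat (ninv_sorted (sort_sorted leq_total u)).
by rewrite (cross_perml w hp) -exprD; congr (_ ^+ _); lia.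
Qed.

Lemma esign_catr u w : esign (w ++ u) = esign u * esign (w ++ sort leq u).
Proof.
rewrite /Defs.esign.
have hp : perm_eq u (sort leq u) by rewrite perm_sym perm_sort.
have hu' : uniq (w ++ u) = uniq (w ++ sort leq u) by apply: perm_uniq; rewrite perm_cat2l.
rewrite -hu'.
case hu: (uniq (w ++ u)); last by case: (uniq u); rewrite ?mul0r ?mulr0.
have := hu; rewrite cat_uniq => /and3P[_ _ ->].
rewrite !ninv_cat (ninv_sorted (sort_sorted leq_total u)) (cross_permr w hp) -exprD.
congr (_ ^+ _); lia.
Qed.

Lemma esign_catC a b : esign (a ++ b) = (-1) ^+ (size a * size b) * esign (b ++ a).
Proof.
rewrite /Defs.esign uniq_catC.
case hu: (uniq (b ++ a)); last by rewrite mulr0.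
have hu' : uniq (a ++ b) by rewrite uniq_catC.
have := cross_swap hu'; rewrite !ninv_cat => h.
rewrite -exprD -[LHS]signr_odd -[RHS]signr_odd; congr (_ ^+ (nat_of_bool _)).
have -> : (size a * size b + (ninv b + ninv a + cross b a) = (ninv a + ninv b + cross a b) + cross b a * 2)%N by rewrite -h; lia.
by rewrite [in RHS]oddD oddM andbF addbF.
Qed.
End Sign.
Arguments esign_nuniq {K}. Arguments esign_sort {K}. Arguments esign_catl {K}.
Arguments esign_catr {K}. Arguments esign_catC {K}.

Lemma sum_pred1_uniq (V : nmodType) (I : eqType) (ks : seq I) k0 (F : I -> V) :
  uniq ks -> k0 \in ks -> \sum_(k <- ks) (if k == k0 then F k else 0) = F k0.
Proof.
by move=> u m; rewrite -big_mkcond -big_filter filter_pred1_uniq // big_seq1.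
Qed.

Section Alg.
Local Open Scope quotient_scope.
Variable K : fieldType.
Local Notation aform := (aform K).
Local Notation acoef := (@acoef K).
Local Notation esign := (@esign K).
Local Notation term := (K * (seq nat * seq nat))%type.

Definition key (m : term) := (sort leq m.2.1, sort leq m.2.2).
Definition wt (m : term) : K := m.1 * esign m.2.1 * esign m.2.2.
Definition tco (m : term) (S T : seq nat) : K := if key m == (S, T) then wt m else 0.
Definition tmul (a b : term) : term := (a.1 * b.1, (a.2.1 ++ b.2.1, a.2.2 ++ b.2.2)).

Lemma acoefE x S T : acoef x S T = \sum_(m <- x) tco m S T.
Proof. by rewrite /Defs.acoef big_mkcond; apply: eq_bigr => m _; rewrite /tco xpair_eqE. Qed.

Lemma acoef_cat x y S T : acoef (x ++ y) S T = acoef x S T + acoef y S T.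
Proof. by rewrite !acoefE big_cat. Qed.

Lemma acoef_amul x y S T :
  acoef (amul x y) S T = \sum_(a <- x) \sum_(b <- y) tco (tmul a b) S T.
Proof. by rewrite acoefE /amul big_allpairs_dep. Qed.


Lemma group_sum (x : aform) (H : seq nat * seq nat -> K) ks :
  uniq ks -> {subset map key x <= ks} ->
  \sum_(m <- x) wt m * H (key m) = \sum_(k <- ks) acoef x k.1 k.2 * H k.
Proof.
move=> uks sub.
transitivity (\sum_(m <- x) \sum_(k <- ks) (if k == key m then wt m * H k else 0)).
  apply: eq_big_seq => m mx; rewrite sum_pred1_uniq //; apply: sub; exact: map_f.
rewrite exchange_big; apply: eq_bigr => k _.
rewrite acoefE mulr_suml; apply: eq_bigr => m _.
rewrite /tco -surjective_pairing (eq_sym k); by case: ifP => _; rewrite ?mul0r.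
Qed.

Definition aequiv (x y : aform) := forall S T, acoef x S T = acoef y S T.

Lemma group_eq (x x' : aform) (H : seq nat * seq nat -> K) : aequiv x x' ->
  \sum_(m <- x) wt m * H (key m) = \sum_(m <- x') wt m * H (key m).
Proof.
move=> e; set ks := undup (map key x ++ map key x').
rewrite (@group_sum x H ks) ?undup_uniq; last by move=> k kx; rewrite mem_undup mem_cat kx.
rewrite (@group_sum x' H ks) ?undup_uniq; last by move=> k kx; rewrite mem_undup mem_cat kx orbT.
by apply: eq_bigr => k _; rewrite e.
all: by [].
Qed.

Lemma sort_catl (u w : seq nat) : sort leq (u ++ w) = sort leq (sort leq u ++ w).
Proof. by apply/(perm_sortP leq_total leq_trans anti_leq); rewrite perm_cat2r perm_sym perm_sort. Qed.
Lemma sort_catr (u w : seq nat) : sort leq (w ++ u) = sort leq (w ++ sort leq u).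
Proof. by apply/(perm_sortP leq_total leq_trans anti_leq); rewrite perm_cat2l perm_sym perm_sort. Qed.

Lemma tco_tmull a b S T : tco (tmul a b) S T = wt a * tco (tmul (1, key a) b) S T.
Proof.
rewrite /tco /key /tmul /= -sort_catl -sort_catl.
case: ifP => _; last by rewrite mulr0.
rewrite /wt /= (esign_catl a.2.1) (esign_catl a.2.2); ring.
Qed.

Lemma tco_tmulr a b S T : tco (tmul a b) S T = wt b * tco (tmul a (1, key b)) S T.
Proof.
rewrite /tco /key /tmul /= -sort_catr -sort_catr.
case: ifP => _; last by rewrite mulr0.
rewrite /wt /= (esign_catr b.2.1) (esign_catr b.2.2); ring.
Qed.


Lemma amul_congl x x' y : aequiv x x' -> aequiv (amul x y) (amul x' y).
Proof.
move=> e S T; rewrite !acoef_amul.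
have E : forall z, \sum_(a <- z) \sum_(b <- y) tco (tmul a b) S T =
   \sum_(a <- z) wt a * (fun k => \sum_(b <- y) tco (tmul (1, k) b) S T) (key a).
  by move=> z; apply: eq_bigr => a _; rewrite mulr_sumr; apply: eq_bigr => b _; rewrite tco_tmull.
by rewrite !E; exact: (group_eq (fun k => \sum_(b <- y) tco (tmul (1, k) b) S T) e).
Qed.

Lemma amul_congr x y y' : aequiv y y' -> aequiv (amul x y) (amul x y').
Proof.
move=> e S T; rewrite !acoef_amul exchange_big [in RHS]exchange_big.
have E : forall z, \sum_(b <- z) \sum_(a <- x) tco (tmul a b) S T =
   \sum_(b <- z) wt b * (fun k => \sum_(a <- x) tco (tmul a (1, k)) S T) (key b).
  by move=> z; apply: eq_bigr => b _; rewrite mulr_sumr; apply: eq_bigr => a _; rewrite tco_tmulr.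
by rewrite !E; exact: (group_eq (fun k => \sum_(a <- x) tco (tmul a (1, k)) S T) e).
Qed.

Definition eqa (x y : aform) : bool :=
  all (fun k => acoef x k.1 k.2 == acoef y k.1 k.2) (map key x ++ map key y).

Lemma acoef_nokey x S T : (S, T) \notin map key x -> acoef x S T = 0.
Proof.
move=> h; rewrite acoefE big1_seq // => m /andP[_ mx]; rewrite /tco; case: eqP => // e.
by rewrite -e map_f in h.
Qed.

Lemma eqaP x y : reflect (aequiv x y) (eqa x y).
Proof.
apply: (iffP allP) => [h S T | h k _]; last by apply/eqP.
case: (boolP ((S, T) \in map key x ++ map key y)) => [/h/eqP //|].
by rewrite mem_cat negb_or => /andP[hx hy]; rewrite !acoef_nokey.
Qed.

Lemma eqa_refl : reflexive eqa. Proof. by move=> x; apply/eqaP. Qed.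
Lemma eqa_sym : symmetric eqa.
Proof. by move=> x y; apply/eqaP/eqaP => h S T; rewrite h. Qed.
Lemma eqa_trans : transitive eqa.
Proof. by move=> y x z /eqaP h1 /eqaP h2; apply/eqaP => S T; rewrite h1 h2. Qed.

Canonical eqa_equiv := EquivRel eqa eqa_refl eqa_sym eqa_trans.

Definition Q := {eq_quot eqa}.
HB.instance Definition _ : EqQuotient _ eqa Q := EqQuotient.on Q.
HB.instance Definition _ := Choice.on Q.

Lemma piQ_eq x y : aequiv x y -> \pi_Q x = \pi_Q y.
Proof. by move=> h; apply/eqmodP/eqaP. Qed.

Lemma piQ_eqP x y : \pi_Q x = \pi_Q y -> aequiv x y.
Proof. by move/eqmodP/eqaP. Qed.

Lemma acoef_repr x S T : acoef (repr (\pi_Q x)) S T = acoef x S T.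
Proof. by apply: piQ_eqP; rewrite reprK. Qed.

Definition ascale (c : K) (x : aform) : aform := [seq (c * m.1, m.2) | m <- x].

Lemma tco_scale c m S T : tco (c * m.1, m.2) S T = c * tco m S T.
Proof. by rewrite /tco /key /wt /=; case: ifP; rewrite ?mulr0 // !mulrA. Qed.

Lemma acoef_ascale c x S T : acoef (ascale c x) S T = c * acoef x S T.
Proof. by rewrite !acoefE big_map mulr_sumr; apply: eq_bigr => m _; rewrite tco_scale. Qed.

Lemma acoef_nil S T : acoef [::] S T = 0.
Proof. by rewrite acoefE big_nil. Qed.

Definition qadd := lift_op2 Q cat.
Lemma pi_add : {morph \pi_Q : x y / x ++ y >-> qadd x y}.
Proof. by move=> x y; unlock qadd; apply: piQ_eq => S T; rewrite !acoef_cat !acoef_repr. Qed.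
Canonical pi_add_morph := PiMorph2 pi_add.

Definition qopp := lift_op1 Q (ascale (-1)).
Lemma pi_opp : {morph \pi_Q : x / ascale (-1) x >-> qopp x}.
Proof. by move=> x; unlock qopp; apply: piQ_eq => S T; rewrite !acoef_ascale !acoef_repr. Qed.
Canonical pi_opp_morph := PiMorph1 pi_opp.

Definition qscale (c : K) := lift_op1 Q (ascale c).
Lemma pi_scale c : {morph \pi_Q : x / ascale c x >-> qscale c x}.
Proof. by move=> x; unlock qscale; apply: piQ_eq => S T; rewrite !acoef_ascale !acoef_repr. Qed.
Canonical pi_scale_morph c := PiMorph1 (pi_scale c).

Definition qmul := lift_op2 Q (@amul K).
Lemma pi_mul : {morph \pi_Q : x y / @amul K x y >-> qmul x y}.
Proof.
move=> x y; unlock qmul; apply: piQ_eq => S T.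
rewrite (amul_congl _ (fun S T => esym (acoef_repr x S T))).
by rewrite (amul_congr _ (fun S T => esym (acoef_repr y S T))).
Qed.
Canonical pi_mul_morph := PiMorph2 pi_mul.

Definition qzero : Q := \pi_Q [::].
Definition qone : Q := \pi_Q (aone K).

Lemma qaddA : associative qadd.
Proof. by elim/quotW=> x; elim/quotW=> y; elim/quotW=> z; rewrite !piE catA. Qed.
Lemma qaddC : commutative qadd.
Proof. by elim/quotW=> x; elim/quotW=> y; rewrite !piE; apply: piQ_eq => S T; rewrite !acoef_cat addrC. Qed.
Lemma qadd0 : left_id qzero qadd.
Proof. by elim/quotW=> x; rewrite /qzero !piE. Qed.
Lemma qaddN : left_inverse qzero qopp qadd.
Proof.
elim/quotW=> x; rewrite /qzero !piE; apply: piQ_eq => S T.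
by rewrite acoef_cat acoef_ascale acoef_nil mulN1r addNr.
Qed.

HB.instance Definition _ := GRing.isZmodule.Build Q qaddA qaddC qadd0 qaddN.

Lemma amulE (x y : aform) : amul x y = [seq tmul a b | a <- x, b <- y].
Proof. by []. Qed.

Lemma tmulA a b c : tmul (tmul a b) c = tmul a (tmul b c).
Proof. by rewrite /tmul /= mulrA !catA. Qed.

Lemma qmulA : associative qmul.
Proof.
elim/quotW=> x; elim/quotW=> y; elim/quotW=> z; rewrite !piE; apply: piQ_eq => S T.
rewrite !acoefE !amulE !big_allpairs_dep; apply: eq_bigr => a _.
rewrite big_allpairs_dep; apply: eq_bigr => b _; apply: eq_bigr => c _; by rewrite tmulA.
Qed.
Lemma qmul1 : left_id qone qmul.
Proof.
elim/quotW=> x; rewrite /qone !piE; apply: piQ_eq => S T.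
rewrite acoef_amul big_cons big_nil addr0 acoefE; apply: eq_bigr => b _.
by rewrite /tmul /= mul1r -!surjective_pairing.
Qed.
Lemma qmulr1 : right_id qone qmul.
Proof.
elim/quotW=> x; rewrite /qone !piE; apply: piQ_eq => S T.
rewrite acoef_amul acoefE; apply: eq_bigr => b _.
by rewrite big_cons big_nil addr0 /tmul /= mulr1 !cats0 -!surjective_pairing.
Qed.
Lemma qmulDl : left_distributive qmul qadd.
Proof.
elim/quotW=> x; elim/quotW=> y; elim/quotW=> z; rewrite !piE; apply: piQ_eq => S T.
by rewrite acoef_cat !acoef_amul big_cat.
Qed.
Lemma qmulDr : right_distributive qmul qadd.
Proof.
elim/quotW=> x; elim/quotW=> y; elim/quotW=> z; rewrite !piE; apply: piQ_eq => S T.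
by rewrite acoef_cat !acoef_amul -big_split; apply: eq_bigr => a _; rewrite big_cat.
Qed.

Lemma acoef_aone : acoef (aone K) [::] [::] = 1.
Proof. by rewrite acoefE big_cons big_nil addr0 /tco /key /= /wt /Defs.esign /= !mulr1. Qed.

Lemma qone_neq0 : qone != 0.
Proof.
apply/negP => /eqP /piQ_eqP /(_ [::] [::]); rewrite acoef_aone acoef_nil => /eqP.
by rewrite oner_eq0.
Qed.

HB.instance Definition _ := GRing.Zmodule_isNzRing.Build Q qmulA qmul1 qmulr1 qmulDl qmulDr qone_neq0.

Lemma qscaleA a b v : qscale a (qscale b v) = qscale (a * b) v.
Proof.
elim/quotW: v => x; rewrite !piE; apply: piQ_eq => S T.
by rewrite !acoef_ascale mulrA.
Qed.
Lemma qscale1 : left_id 1 qscale.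
Proof. by elim/quotW=> x; rewrite !piE; apply: piQ_eq => S T; rewrite acoef_ascale mul1r. Qed.
Lemma qscaleDr : right_distributive qscale qadd.
Proof. by move=> a; elim/quotW=> x; elim/quotW=> y; rewrite !piE /ascale map_cat. Qed.
Lemma qscaleDl v : {morph qscale^~ v : a b / a + b >-> qadd a b}.
Proof.
move=> a b; elim/quotW: v => x; rewrite !piE; apply: piQ_eq => S T.
by rewrite acoef_cat !acoef_ascale mulrDl.
Qed.

HB.instance Definition _ := GRing.Zmodule_isLmodule.Build K Q qscaleA qscale1 qscaleDr qscaleDl.

Lemma qscaleAl (a : K) (u v : Q) : qscale a (qmul u v) = qmul (qscale a u) v.
Proof.
elim/quotW: u => x; elim/quotW: v => y; rewrite !piE; apply: piQ_eq => S T.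
rewrite acoef_ascale !acoef_amul big_map mulr_sumr; apply: eq_bigr => m _.
rewrite mulr_sumr; apply: eq_bigr => b _.
by rewrite -tco_scale /tmul /= mulrA.
Qed.
HB.instance Definition _ := GRing.Lmodule_isLalgebra.Build K Q qscaleAl.

Lemma qscaleAr (a : K) (u v : Q) : qscale a (qmul u v) = qmul u (qscale a v).
Proof.
elim/quotW: u => x; elim/quotW: v => y; rewrite !piE; apply: piQ_eq => S T.
rewrite acoef_ascale !acoef_amul mulr_sumr; apply: eq_bigr => m _.
rewrite big_map mulr_sumr; apply: eq_bigr => b _.
by rewrite -tco_scale /tmul /= mulrCA mulrA.
Qed.
HB.instance Definition _ := GRing.Lalgebra_isAlgebra.Build K Q qscaleAr.

End Alg.
Arguments key {K}. Arguments wt {K}. Arguments tco {K}. Arguments tmul {K}. Arguments ascale {K}.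

Section QTheory.
Variable K : fieldType.
Local Open Scope quotient_scope.
Local Notation aform := (aform K).
Local Notation acoef := (@acoef K).
Local Notation esign := (@esign K).
Local Notation term := (K * (seq nat * seq nat))%type.
Local Notation Q := (Q K).
Local Notation pi := (\pi_Q : aform -> Q).

Lemma piD x y : pi (x ++ y) = pi x + pi y. Proof. exact: pi_add. Qed.
Lemma piZ c x : pi (ascale c x) = c *: pi x. Proof. exact: pi_scale. Qed.
Lemma piM x y : pi (amul x y) = pi x * pi y. Proof. exact: pi_mul. Qed.
Lemma pi0 : pi [::] = 0. Proof. by []. Qed.
Lemma pi1 : pi (aone K) = 1. Proof. by []. Qed.

Lemma pi_eq0P x : pi x = 0 <-> azero x.
Proof.
split => [/piQ_eqP h S T | h]; first by rewrite h acoef_nil.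
by rewrite -pi0; apply: piQ_eq => S T; rewrite h acoef_nil.
Qed.

Definition e (u v : seq nat) : Q := pi [:: (1, (u, v))].
Definition tau (m : term) : Q := m.1 *: e m.2.1 m.2.2.

Lemma pi_seq1 m : pi [:: m] = tau m.
Proof.
rewrite /tau /e -piZ; congr pi; rewrite /ascale /= mulr1; by case: m => c [u v].
Qed.

Lemma pi_cons m x : pi (m :: x) = tau m + pi x.
Proof. by rewrite -pi_seq1 -piD. Qed.

Lemma pi_sum x : pi x = \sum_(m <- x) tau m.
Proof. by elim: x => [|m x IH]; rewrite ?big_nil ?big_cons ?pi_cons ?IH. Qed.

Lemma e_mul u v u' v' : e u v * e u' v' = e (u ++ u') (v ++ v').
Proof. by rewrite /e -piM /amul /= mulr1. Qed.

Lemma acoef_seq1 m S T : acoef [:: m] S T = tco m S T.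
Proof. by rewrite acoefE big_cons big_nil addr0. Qed.

Lemma e_comm u v u' v' :
  e u v * e u' v' = (-1) ^+ (size u * size u' + size v * size v') *: (e u' v' * e u v).
Proof.
rewrite !e_mul /e -piZ; apply: piQ_eq => S T.
rewrite /ascale /= !acoef_seq1 /tco /key /= /wt /=.
have -> : sort leq (u ++ u') = sort leq (u' ++ u).
  by apply/(perm_sortP leq_total leq_trans anti_leq); rewrite perm_catC.
have -> : sort leq (v ++ v') = sort leq (v' ++ v).
  by apply/(perm_sortP leq_total leq_trans anti_leq); rewrite perm_catC.
case: ifP => _ //.
rewrite (esign_catC u) (esign_catC v) exprD; ring.
Qed.

Lemma e_nuniq u v : ~~ uniq v -> e u v = 0.
Proof.
move=> h; rewrite /e -pi0; apply: piQ_eq => S T.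
by rewrite acoef_seq1 acoef_nil /tco /wt /= (esign_nuniq _ h) mulr0; case: ifP.
Qed.

Lemma tau_mul a b : tau a * tau b = tau (tmul a b).
Proof. by rewrite /tau -scalerAl -scalerAr scalerA e_mul. Qed.

Lemma tau_comm a b : tau a * tau b =
  (-1) ^+ (size a.2.1 * size b.2.1 + size a.2.2 * size b.2.2) *: (tau b * tau a).
Proof.
rewrite /tau -!scalerAl -!scalerAr !scalerA e_comm scalerA; congr (_ *: _); ring.
Qed.

Definition feval (Phi : fvarT -> Q) (f : fpoly K) : Q :=
  \sum_(m <- f) m.1 *: \prod_(v <- m.2) Phi v.

Lemma pi_word (phi : fvarT -> aform) w :
  pi (foldr (@amul K) (aone K) (map phi w)) = \prod_(v <- w) pi (phi v).
Proof. by elim: w => [|v w IH]; rewrite ?big_nil ?big_cons //= piM IH. Qed.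

Lemma aeval_pi phi f : pi (aeval phi f) = feval (fun v => pi (phi v)) f.
Proof.
rewrite /aeval /feval; elim: f => [|m f IH]; first by rewrite big_nil.
by rewrite big_cons /= piD IH -pi_word -piZ.
Qed.

Lemma T2_evalP f : T2_E0sE0 f <-> forall phi, graded_assign phi -> feval (fun v => pi (phi v)) f = 0.
Proof.
split => h phi g; first by rewrite -aeval_pi; apply/pi_eq0P; apply: h.
by apply/pi_eq0P; rewrite aeval_pi; apply: h.
Qed.

Lemma feval_add Phi p q : feval Phi (fadd p q) = feval Phi p + feval Phi q.
Proof. by rewrite /feval big_cat. Qed.
Lemma feval_scale Phi c p : feval Phi (fscale c p) = c *: feval Phi p.
Proof. by rewrite /feval big_map scaler_sumr; apply: eq_bigr => m _; rewrite scalerA. Qed.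
Lemma feval_sub Phi p q : feval Phi (fsub p q) = feval Phi p - feval Phi q.
Proof. by rewrite /fsub feval_add feval_scale scaleN1r. Qed.
Lemma feval_mul Phi p q : feval Phi (fmul p q) = feval Phi p * feval Phi q.
Proof.
rewrite /feval /fmul big_allpairs_dep mulr_suml; apply: eq_bigr => a _.
rewrite mulr_sumr; apply: eq_bigr => b _.
by rewrite /= big_cat -scalerAl -scalerAr scalerA.
Qed.
Lemma feval_zero Phi : feval Phi (fzero K) = 0.
Proof. by rewrite /feval big_nil. Qed.
Lemma feval_one Phi : feval Phi (fone K) = 1.
Proof. by rewrite /feval big_cons big_nil /= big_nil scale1r addr0. Qed.
Lemma feval_var Phi v : feval Phi (fvar K v) = Phi v.
Proof. by rewrite /feval big_cons big_nil /= big_cons big_nil scale1r addr0 mulr1. Qed.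
Lemma feval_prod (Phi : fvarT -> Q) (ps : seq (fpoly K)) : feval Phi (Defs.fprod ps) = \prod_(r <- ps) feval Phi r.
Proof. by elim: ps => [|q ps IH]; rewrite ?big_nil ?feval_one //= big_cons feval_mul IH. Qed.
Lemma feval_comm Phi a b : feval Phi (fcomm a b) = feval Phi a * feval Phi b - feval Phi b * feval Phi a.
Proof. by rewrite /fcomm feval_sub !feval_mul. Qed.
Lemma feval_circ Phi a b : feval Phi (fcirc a b) = feval Phi a * feval Phi b + feval Phi b * feval Phi a.
Proof. by rewrite /fcirc feval_add !feval_mul. Qed.


Definition pu (m : term) := odd (size m.2.1).
Definition pv (m : term) := odd (size m.2.2).

Definition isG (d : bool) (q : Q) := exists L : aform, all (fun m => pv m == d) L /\ q = pi L.

Lemma isG0 d : isG d 0. Proof. by exists [::]. Qed.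
Lemma isGD d a b : isG d a -> isG d b -> isG d (a + b).
Proof. by move=> [L1 [h1 ->]] [L2 [h2 ->]]; exists (L1 ++ L2); rewrite all_cat h1 h2 piD. Qed.
Lemma isGZ d c a : isG d a -> isG d (c *: a).
Proof. by move=> [L [h ->]]; exists (ascale c L); rewrite all_map piZ. Qed.
Lemma isGM d1 d2 a b : isG d1 a -> isG d2 b -> isG (d1 (+) d2) (a * b).
Proof.
move=> [L1 [h1 ->]] [L2 [h2 ->]]; exists (amul L1 L2); rewrite piM; split => //.
apply/allP => m /allpairsP [[a' b'] [/= ha hb ->]].
move/allP: h1 => /(_ _ ha) /eqP <-; move/allP: h2 => /(_ _ hb) /eqP <-.
by rewrite /pv /= size_cat oddD.
Qed.
Lemma isG1 : isG false 1. Proof. by exists (aone K). Qed.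
Lemma isG_sum d I (r : seq I) (F : I -> Q) : (forall i, isG d (F i)) -> isG d (\sum_(i <- r) F i).
Proof. by move=> h; elim: r => [|i r IH]; rewrite ?big_nil ?big_cons; [exact: isG0 | exact: isGD]. Qed.

Lemma acoef_nuniq x S T : ~~ (uniq S && uniq T) -> acoef x S T = 0.
Proof.
move=> h; rewrite acoefE big1 // => m _; rewrite /tco; case: eqP => // -[eS eT].
rewrite /wt; move: h; rewrite -eS -eT !sort_uniq negb_and => /orP[] /esign_nuniq ->;
by rewrite ?mulr0 ?mul0r.
Qed.

Definition nfd (d : bool) (x : aform) : aform :=
  [seq (acoef x k.1 k.2, k) | k <- undup (map key x) & odd (size k.2) == d].

Lemma nfd_all d x : all (fun m => pv m == d) (nfd d x).
Proof. by apply/allP => m /mapP [k]; rewrite mem_filter => /andP[h _] ->. Qed.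

Lemma nfdP d x : (forall S T, odd (size T) != d -> acoef x S T = 0) -> pi x = pi (nfd d x).
Proof.
move=> hx; apply: piQ_eq => S T; rewrite [in RHS]acoefE /nfd big_map.
have E : forall k, k \in map key x ->
   tco (acoef x k.1 k.2, k) S T = if k == (S, T) then acoef x S T else 0.
  move=> k /mapP [m _ ->]; rewrite /tco /key /= !(sorted_sort leq_trans (sort_sorted leq_total _)).
  case: eqP => [[<- <-]|//]; rewrite /wt /= !esign_sort.
  case: (boolP (uniq m.2.1 && uniq m.2.2)) => [/andP[-> ->]|h]; first by rewrite !mulr1.
  rewrite acoef_nuniq ?mul0r // !sort_uniq //.
rewrite (eq_big_seq (fun k => if k == (S, T) then acoef x S T else 0)); last first.
  by move=> k; rewrite mem_filter mem_undup => /andP[_ /E].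
case: (boolP ((S, T) \in [seq k <- undup (map key x) | odd (size k.2) == d])) => h.
  rewrite sum_pred1_uniq //; exact/filter_uniq/undup_uniq.
rewrite big1_seq; last by move=> k /andP[_ hk]; case: eqP => // ek; rewrite -ek hk in h.
move: h; rewrite mem_filter mem_undup negb_and /= => /orP[h|h]; first by rewrite hx.
by rewrite acoef_nokey.
Qed.

Lemma isG_acoef d x : isG d (pi x) -> forall S T, odd (size T) != d -> acoef x S T = 0.
Proof.
move=> [L [hL /piQ_eqP e]] S T hT; rewrite e acoefE big1_seq // => m /andP[_ mL].
rewrite /tco; case: eqP => // -[_ eT]; move/allP: hL => /(_ _ mL).
by rewrite /pv -(size_sort leq) eT => /eqP h; rewrite h eqxx in hT.
Qed.

Lemma graded_isG phi : graded_assign phi <-> forall v, isG v.1 (pi (phi v)).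
Proof.
split => h v.
  move: (h v); case: v.1 => /= hv; [exists (nfd true (phi v)) | exists (nfd false (phi v))];
  rewrite nfd_all; split=> //; apply: nfdP => S T.
    by move=> hT; apply: hv; move: hT; rewrite ?eqbF_neg ?negbK ?eqb_id.
  by move=> hT; apply: hv; move: hT; rewrite ?eqbF_neg ?negbK ?eqb_id.
move: (isG_acoef (h v)); case: v.1 => /= hv S T hT; apply: hv;
  by rewrite ?eqbF_neg ?negbK ?eqb_id.
Qed.

Definition fcoefs (f : fpoly K) := undup (map snd f).

Lemma feval_group Phi (f : fpoly K) ws : uniq ws -> {subset map snd f <= ws} ->
  feval Phi f = \sum_(w <- ws) fcoef f w *: \prod_(v <- w) Phi v.
Proof.
move=> uws sub; rewrite /feval.
transitivity (\sum_(m <- f) \sum_(w <- ws) (if w == m.2 then m.1 *: \prod_(v <- w) Phi v else 0)).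
  apply: eq_big_seq => m mf; rewrite sum_pred1_uniq //.
  by apply: sub; exact: map_f.
rewrite (@exchange_big Q 0 +%R); apply: eq_bigr => w _.
rewrite /fcoef scaler_suml [RHS]big_mkcond; apply: eq_bigr => m _.
by rewrite (eq_sym w); case: ifP => _; rewrite ?scale0r.
Qed.

Lemma feval_fpeq Phi (p q : fpoly K) : fpeq p q -> feval Phi p = feval Phi q.
Proof.
move=> e; set ws := undup (map snd p ++ map snd q).
rewrite (@feval_group Phi p ws) ?undup_uniq; last by move=> w hw; rewrite mem_undup mem_cat hw.
rewrite (@feval_group Phi q ws) ?undup_uniq; last by move=> w hw; rewrite mem_undup mem_cat hw orbT.
by apply: eq_bigr => w _; rewrite e.
all: by [].
Qed.

Lemma isG_word (Phi : fvarT -> Q) w : (forall v, isG v.1 (Phi v)) -> isG (wdeg w) (\prod_(v <- w) Phi v).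
Proof.
move=> h; elim: w => [|v w IH]; first by rewrite big_nil; exact: isG1.
rewrite big_cons; have -> : wdeg (v :: w) = v.1 (+) wdeg w by rewrite /wdeg /= oddD oddb.
exact: isGM.
Qed.

Lemma isG_feval (Phi : fvarT -> Q) (q : fpoly K) d : (forall v, isG v.1 (Phi v)) -> fhomog q d -> isG d (feval Phi q).
Proof.
move=> h hq; rewrite (@feval_group Phi q (undup (map snd q))) ?undup_uniq; last by move=> w; rewrite mem_undup.
apply: isG_sum => w; case: (eqVneq (fcoef q w) 0) => [->|nz]; first by rewrite scale0r; exact: isG0.
  by rewrite -(hq w nz); apply: isGZ; apply: isG_word.
all: by [].
Qed.

Lemma feval_flatten Phi (L : seq (fpoly K)) : feval Phi (flatten L) = \sum_(q <- L) feval Phi q.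
Proof. by elim: L => [|q L IH]; rewrite ?big_nil ?big_cons ?feval_zero //= -IH -feval_add. Qed.

Lemma feval_subst Phi s (p : fpoly K) : feval Phi (fsubst s p) = feval (fun v => feval Phi (s v)) p.
Proof.
rewrite /fsubst feval_flatten big_map /feval; apply: eq_bigr => m _.
by rewrite -/(feval _ _) feval_scale feval_prod big_map.
Qed.

Lemma T2_ideal : isT2ideal (@T2_E0sE0 K).
Proof.
split; [|split; [|split; [|split; [|split]]]].
- move=> p q e /T2_evalP h; apply/T2_evalP => phi g; rewrite -(feval_fpeq _ e); exact: h.
- by apply/T2_evalP => phi g; rewrite feval_zero.
- move=> p q /T2_evalP hp /T2_evalP hq; apply/T2_evalP => phi g.
  by rewrite feval_add hp ?hq ?addr0.
- move=> c p /T2_evalP hp; apply/T2_evalP => phi g; by rewrite feval_scale hp ?scaler0.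
- move=> p q /T2_evalP hp; split; apply/T2_evalP => phi g; by rewrite feval_mul hp ?mulr0 ?mul0r.
move=> s p gs /T2_evalP hp; apply/T2_evalP => phi g.
rewrite feval_subst.
have := hp (fun v => aeval phi (s v)); rewrite /feval.
under [\sum_(m <- p) _]eq_bigr do under eq_bigr do rewrite aeval_pi.
apply; apply/graded_isG => v; rewrite aeval_pi; apply: isG_feval (gs v).
by apply/graded_isG.
Qed.

End QTheory.
Arguments e {K}. Arguments tau {K}. Arguments feval {K}. Arguments pu {K}. Arguments pv {K}.
Arguments isG {K}. Arguments nfd {K}.

Section Multi.
Variable K : fieldType.
Local Open Scope quotient_scope.
Local Notation aform := (aform K).
Local Notation term := (K * (seq nat * seq nat))%type.
Local Notation Q := (Q K).
Local Notation pi := (\pi_Q : aform -> Q).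

Lemma graded_nfd phi v : graded_assign phi -> pi (phi v) = pi (nfd v.1 (phi v)).
Proof.
move=> h; move: (h v); case: v.1 => /= hv; apply: nfdP => S T hT; apply: hv; move: hT;
by rewrite ?eqbF_neg ?negbK ?eqb_id.
Qed.

Definition upd (s : fvarT -> term) v t := fun x => if x == v then t else s x.

Fixpoint chsum (V : seq fvarT) (L : fvarT -> seq term) (G : (fvarT -> term) -> Q)
   (s0 : fvarT -> term) : Q :=
  match V with
  | [::] => G s0
  | v :: V' => \sum_(t <- L v) chsum V' L G (upd s0 v t)
  end.

Lemma chsum_lin (I : Type) (r : seq I) (c : I -> K) V L G s0 :
  \sum_(i <- r) c i *: chsum V L (G i) s0 = chsum V L (fun s => \sum_(i <- r) c i *: G i s) s0.
Proof.
elim: V s0 => [|v V IH] s0 //=.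
under eq_bigr do rewrite scaler_sumr.
rewrite (@exchange_big Q 0 +%R); apply: eq_bigr => t _; exact: IH.
Qed.

Lemma chsum0 V L G s0 :
  (forall s, (forall x, x \in V -> s x \in L x) -> (forall x, x \notin V -> s x = s0 x) -> G s = 0) ->
  chsum V L G s0 = 0.
Proof.
elim: V s0 => [|v V IH] s0 h /=; first by apply: h.
apply: big1_seq => t /andP[_ tL]; apply: IH => s h1 h2; apply: h.
  move=> x; rewrite inE; case: (boolP (x \in V)) => [/h1 //|xV]; rewrite orbF => /eqP exv.
  by rewrite exv in xV *; rewrite h2 // /upd eqxx.
move=> x; rewrite inE negb_or => /andP[xv xV]; by rewrite h2 // /upd (negbTE xv).
Qed.

Lemma prod_lin (w : seq fvarT) (H : fvarT -> Q) v (I : Type) (r : seq I) (F : I -> Q) :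
  count_mem v w = 1%N -> H v = \sum_(i <- r) F i ->
  \prod_(x <- w) H x = \sum_(i <- r) \prod_(x <- w) (if x == v then F i else H x).
Proof.
move=> cw hv; elim: w cw => [|x w IH] //= cw.
rewrite big_cons; case: (eqVneq x v) => [exv|nxv].
  rewrite exv hv mulr_suml; apply: eq_bigr => i _; rewrite big_cons eqxx.
  congr (_ * _); apply: eq_big_seq => y yw; case: eqP => // eyv.
  move: cw; rewrite exv eqxx /= => /eqP; rewrite eqSS => /eqP /count_memPn.
  by rewrite -eyv yw.
move: cw; rewrite /= (negbTE nxv) add0n => /IH ->.
rewrite mulr_sumr; apply: eq_bigr => i _; by rewrite big_cons (negbTE nxv).
Qed.

Lemma prod_chsum V L s0 (w : seq fvarT) : uniq V -> (forall x, x \in V -> count_mem x w = 1%N) ->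
  \prod_(x <- w) (if x \in V then pi (L x) else tau (s0 x))
   = chsum V L (fun s => \prod_(x <- w) tau (s x)) s0.
Proof.
elim: V s0 => [|v V IH] s0 /= uV hc; first by apply: eq_bigr.
move: uV => /andP[vV uV].
rewrite (@prod_lin w _ v _ (L v) tau); last by rewrite inE eqxx /= pi_sum.
  apply: eq_bigr => t _; rewrite -IH //; last by move=> x xV; apply: hc; rewrite inE xV orbT.
  apply: eq_bigr => x _; rewrite /upd inE; case: eqP => [->|_] //=.
  by rewrite (negbTE vV).
by apply: hc; rewrite inE eqxx.
Qed.

Fixpoint ins (x : fvarT) (s : seq fvarT) : seq fvarT :=
  match s with
  | [::] => [:: x]
  | y :: s' => if (y.2 < x.2)%N then y :: ins x s' else x :: s
  end.
Fixpoint isort (w : seq fvarT) : seq fvarT :=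
  match w with [::] => [::] | x :: w' => ins x (isort w') end.
Fixpoint sgi (sg : fvarT -> fvarT -> K) x s : K :=
  match s with
  | [::] => 1
  | y :: s' => if (y.2 < x.2)%N then sg x y * sgi sg x s' else 1
  end.
Fixpoint sgn (sg : fvarT -> fvarT -> K) w : K :=
  match w with [::] => 1 | x :: w' => sgi sg x (isort w') * sgn sg w' end.

Lemma perm_ins x s : perm_eq (ins x s) (x :: s).
Proof.
elim: s => [|y s IH] //=; case: ifP => _ //.
by apply/permP => a; rewrite /= (permP IH a) /= addnCA.
Qed.

Lemma perm_isort w : perm_eq (isort w) w.
Proof.
elim: w => [|x w IH] //=; apply: perm_trans (perm_ins _ _) _; by rewrite perm_cons.
Qed.

Section Reorder.
Variables (T : fvarT -> Q) (sg : fvarT -> fvarT -> K).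
Hypothesis hT : forall x y, T x * T y = sg x y *: (T y * T x).

Lemma ins_prod x s : T x * \prod_(y <- s) T y = sgi sg x s *: \prod_(y <- ins x s) T y.
Proof.
elim: s => [|y s IH] /=; first by rewrite big_nil big_cons big_nil scale1r.
case: ifP => _; last by rewrite scale1r [RHS]big_cons.
by rewrite !big_cons mulrA hT -scalerAl -mulrA IH -scalerAr scalerA.
Qed.

Lemma isort_prod w : \prod_(x <- w) T x = sgn sg w *: \prod_(x <- isort w) T x.
Proof.
elim: w => [|x w IH] /=; first by rewrite scale1r.
by rewrite big_cons IH -scalerAr ins_prod scalerA mulrC.
Qed.
End Reorder.

Definition sgP (P : fvarT -> bool) (x y : fvarT) : K := (-1) ^+ ((P x && P y) (+) (x.1 && y.1)).

Definition s0 (x : fvarT) : term := (0, ([::], if x.1 then [:: 0%N] else [::])).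

Lemma multilin_ok (g : fpoly K) V0 : uniq V0 -> all (fun m => isort m.2 == V0) g ->
  (forall P, \sum_(m <- g) m.1 * sgn (sgP P) m.2 = 0) -> T2_E0sE0 g.
Proof.
move=> uV hg hs; apply/T2_evalP => phi gr.
set L := fun v => nfd v.1 (phi v).
have hperm : forall m, m \in g -> perm_eq m.2 V0.
  by move=> m mg; move/allP: hg => /(_ _ mg) /eqP <-; rewrite perm_sym perm_isort.
have E : forall m, m \in g -> \prod_(x <- m.2) pi (phi x) = chsum V0 L (fun s => \prod_(x <- m.2) tau (s x)) s0.
  move=> m mg; rewrite -prod_chsum //; last first.
    by move=> x xV; rewrite (permP (hperm _ mg)) count_uniq_mem ?xV.
  apply: eq_big_seq => x xm; rewrite -(perm_mem (hperm _ mg)) xm graded_nfd //.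
rewrite /feval (eq_big_seq (fun m => m.1 *: chsum V0 L (fun s => \prod_(x <- m.2) tau (s x)) s0)); last first.
  by move=> m mg; rewrite E.
rewrite chsum_lin; apply: chsum0 => s h1 h2.
have pvs : forall x, pv (s x) = x.1.
  move=> x; case: (boolP (x \in V0)) => [/h1|/h2 ->]; last by rewrite /pv /s0 /=; case: x.1.
  by move/allP: (nfd_all x.1 (phi x)) => h /h /eqP.
set P := fun x => pu (s x).
have hT : forall x y, tau (s x) * tau (s y) = sgP P x y *: (tau (s y) * tau (s x)).
  move=> x y; rewrite tau_comm /sgP -signr_odd oddD !oddM.
  by move: (pvs x) (pvs y); rewrite /pv /P /pu => -> ->.
rewrite (eq_big_seq (fun m => (m.1 * sgn (sgP P) m.2) *: \prod_(x <- V0) tau (s x))); last first.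
  move=> m mg; rewrite (isort_prod hT) scalerA; move/allP: hg => /(_ _ mg) /eqP ->; done.
by rewrite -scaler_suml hs scale0r.
Qed.

End Multi.
Ltac solve_sg := repeat match goal with |- context [?f (?b, ?n)] =>
    let T := type of f in unify T (fvarT -> bool); case: (f (b, n)) end;
  rewrite /= ?expr0 ?expr1; ring.
Ltac gen_tac V0 := apply: (@multilin_ok _ _ V0) => //; move=> P;
  rewrite /fcomm /fcirc /fsub /fadd /fscale /fmul /y /z /fvar /=;
  rewrite !big_cons big_nil /sgP /=; solve_sg.
Section Gens.
Variable K : fieldType.
Lemma gen1 : T2_E0sE0 (fcomm (fcomm (y K 1) (y K 2)) (y K 3)).
Proof. gen_tac [:: (false,1%N); (false,2%N); (false,3%N)]. Qed.
Lemma gen2 : T2_E0sE0 (fcomm (fcomm (y K 1) (y K 2)) (z K 3)).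
Proof. gen_tac [:: (false,1%N); (false,2%N); (true,3%N)]. Qed.
Lemma gen3 : T2_E0sE0 (fcomm (fcomm (y K 1) (z K 2)) (y K 3)).
Proof. gen_tac [:: (false,1%N); (true,2%N); (false,3%N)]. Qed.
Lemma gen4 : T2_E0sE0 (fcirc (fcomm (y K 1) (z K 2)) (z K 3)).
Proof. gen_tac [:: (false,1%N); (true,2%N); (true,3%N)]. Qed.
Lemma gen5 : T2_E0sE0 (fcomm (fcirc (z K 1) (z K 2)) (z K 3)).
Proof. gen_tac [:: (true,1%N); (true,2%N); (true,3%N)]. Qed.
Lemma gen6 : T2_E0sE0 (fsub (fmul (fcirc (z K 1) (z K 2)) (fcirc (z K 3) (z K 4)))
              (fmul (fcirc (z K 1) (z K 3)) (fcirc (z K 2) (z K 4)))).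
Proof. gen_tac [:: (true,1%N); (true,2%N); (true,3%N); (true,4%N)]. Qed.
Lemma gen7 b1 b4 : T2_E0sE0 (fadd (fmul (fcomm (fvar K (b1, 1%N)) (y K 2)) (fcomm (y K 3) (fvar K (b4, 4%N))))
                 (fmul (fcomm (fvar K (b1, 1%N)) (y K 3)) (fcomm (y K 2) (fvar K (b4, 4%N))))).
Proof.
case: b1; case: b4; [gen_tac [:: (true,1%N); (false,2%N); (false,3%N); (true,4%N)]
 | gen_tac [:: (true,1%N); (false,2%N); (false,3%N); (false,4%N)]
 | gen_tac [:: (false,1%N); (false,2%N); (false,3%N); (true,4%N)]
 | gen_tac [:: (false,1%N); (false,2%N); (false,3%N); (false,4%N)]].
Qed.
Lemma gen8 : T2_E0sE0 (fsub (fmul (fcomm (y K 1) (z K 2)) (fcirc (z K 3) (z K 4)))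
              (fmul (fcomm (y K 1) (z K 3)) (fcirc (z K 2) (z K 4)))).
Proof. gen_tac [:: (false,1%N); (true,2%N); (true,3%N); (true,4%N)]. Qed.
End Gens.

Section Power.
Variable K : fieldType.
Local Open Scope quotient_scope.
Local Notation aform := (aform K).
Local Notation term := (K * (seq nat * seq nat))%type.
Local Notation Q := (Q K).
Local Notation pi := (\pi_Q : aform -> Q).

Definition sp (a b : bool) (q : Q) :=
  exists L : aform, all (fun m => (pu m == a) && (pv m == b)) L /\ q = pi L.

Definition sgn2 (a b c d : bool) : K := (-1) ^+ ((a && c) (+) (b && d)).

Lemma sp_comm a b c d x y : sp a b x -> sp c d y -> x * y = sgn2 a b c d *: (y * x).
Proof.
move=> [L1 [h1 ->]] [L2 [h2 ->]]; rewrite !pi_sum.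
transitivity (\sum_(m <- L1) \sum_(n <- L2) tau m * tau n).
  by rewrite mulr_suml; apply: eq_bigr => m _; rewrite mulr_sumr.
transitivity (\sum_(m <- L1) \sum_(n <- L2) sgn2 a b c d *: (tau n * tau m)); last first.
  rewrite mulr_suml scaler_sumr (@exchange_big Q 0 +%R) /=; apply: eq_bigr => n _.
  by rewrite mulr_sumr scaler_sumr.
apply: eq_big_seq => m mL1; apply: eq_big_seq => n nL2.
rewrite tau_comm /sgn2 -signr_odd oddD !oddM.
move/allP: h1 => /(_ _ mL1) /andP[/eqP <- /eqP <-].
by move/allP: h2 => /(_ _ nL2) /andP[/eqP <- /eqP <-].
Qed.

Lemma sp0 a b : sp a b 0. Proof. by exists [::]. Qed.
Lemma spD a b x y : sp a b x -> sp a b y -> sp a b (x + y).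
Proof. by move=> [L1 [h1 ->]] [L2 [h2 ->]]; exists (L1 ++ L2); rewrite all_cat h1 h2 piD. Qed.
Lemma spZ a b c x : sp a b x -> sp a b (c *: x).
Proof. by move=> [L [h ->]]; exists (ascale c L); rewrite all_map piZ. Qed.
Lemma spM a b c d x y : sp a b x -> sp c d y -> sp (a (+) c) (b (+) d) (x * y).
Proof.
move=> [L1 [h1 ->]] [L2 [h2 ->]]; exists (amul L1 L2); rewrite piM; split => //.
apply/allP => m /allpairsP [[a' b'] [/= ha hb ->]].
move/allP: h1 => /(_ _ ha) /andP[/eqP <- /eqP <-]; move/allP: h2 => /(_ _ hb) /andP[/eqP <- /eqP <-].
by rewrite /pu /pv /= !size_cat !oddD !eqxx.
Qed.

Lemma sp_split d (L : aform) : all (fun m => pv m == d) L ->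
  exists x0 x1, [/\ pi L = x0 + x1, sp false d x0 & sp true d x1].
Proof.
move=> h; exists (pi (filter (predC pu) L)), (pi (filter pu L)); split.
- by rewrite !pi_sum !big_filter [LHS](bigID pu) /= addrC.
- exists (filter (predC pu) L); split => //; apply/allP => m; rewrite mem_filter => /andP[hm mL].
  by move/allP: h => /(_ _ mL) ->; rewrite andbT eqbF_neg.
- exists (filter pu L); split => //; apply/allP => m; rewrite mem_filter => /andP[hm mL].
  by move/allP: h => /(_ _ mL) ->; rewrite andbT eqb_id.
Qed.

Lemma graded_split phi v : graded_assign phi ->
  exists x0 x1, [/\ pi (phi v) = x0 + x1, sp false v.1 x0 & sp true v.1 x1].
Proof. by move=> g; rewrite graded_nfd //; apply: sp_split; exact: nfd_all. Qed.

Lemma mulDD (a b c d : Q) : (a + b) * (c + d) = a * c + a * d + (b * c + b * d).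
Proof. by rewrite mulrDl !mulrDr. Qed.

Lemma comm_of a b c d x y : sp a b x -> sp c d y -> (a && c) (+) (b && d) = false -> y * x = x * y.
Proof. by move=> hx hy e; rewrite (sp_comm hx hy) /sgn2 e expr0 scale1r. Qed.
Lemma acomm_of a b c d x y : sp a b x -> sp c d y -> (a && c) (+) (b && d) = true -> y * x = - (x * y).
Proof. by move=> hx hy e; rewrite (sp_comm hx hy) /sgn2 e expr1 scaleN1r opprK. Qed.

Variable p : nat.
Hypothesis charK : p \in [pchar K].
Hypothesis p_gt2 : (2 < p)%N.

Lemma two_neq0 : (2%:R : K) != 0.
Proof.
rewrite -(dvdn_pcharf charK); apply/negP => /dvdn_leq h.
by have := h isT; move: p_gt2; case: p => [|[|[|]]].
Qed.

Lemma sq0 x : x + x = 0 -> x = 0 :> Q.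
Proof.
move=> h; have : (2%:R : K) *: x = 0 by rewrite scaler_nat mulr2n h.
move/(congr1 (fun v => (2%:R : K)^-1 *: v)); rewrite scalerA mulVf ?two_neq0 // scale1r scaler0 //.
Qed.

Lemma anti_sq a b x : sp a b x -> (a && a) (+) (b && b) = true -> x * x = 0.
Proof. by move=> hx e; apply: sq0; rewrite {1}(acomm_of hx hx e) addNr. Qed.

Lemma pcharQ : p \in [pchar Q].
Proof.
apply/andP; split; first exact: pcharf_prime charK.
by rewrite -scaler_nat (pcharf0 charK) scale0r.
Qed.

Lemma tau_sq0 (m : term) : pv m -> tau m * tau m = 0.
Proof.
move=> h; rewrite tau_mul /tau /tmul /= e_nuniq ?scaler0 //.
case: m h => c [u [|i v]] //= _.
by rewrite mem_cat inE eqxx orbT.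
Qed.

Lemma powp0 (L : aform) : all (fun m => (pu m == true) && (pv m == true)) L -> (pi L) ^+ p = 0.
Proof.
elim: L => [|m L IH] /=.
  by rewrite pi0 expr0n; move: p_gt2; case: p.
move=> /andP[hm hL]; rewrite pi_cons.
have hm1 : sp true true (tau m) by exists [:: m]; rewrite /= hm pi_seq1.
have hL1 : sp true true (pi L) by exists L.
have c : GRing.comm (tau m) (pi L) by rewrite /GRing.comm (comm_of hm1 hL1).
have := pFrobenius_autD_comm pcharQ c; rewrite !pFrobenius_autE => ->.
rewrite IH // addr0.
move: hm => /andP[_ /eqP hv].
have -> : p = (2 + (p - 2))%N by move: p_gt2; case: p => [|[|[|]]] //.
by rewrite exprD expr2 tau_sq0 ?hv // mul0r.
Qed.

Lemma chain (W : Q) (I : Type) (s : seq I) (X : I -> Q) B r :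
  (forall i, W * X i = - (X i * W)) -> (W * B = B * W \/ W * B = - (B * W)) ->
  exists A, \prod_(i <- s) (X i * W) * (B * W ^+ r) = A * W ^+ (size s + r).
Proof.
move=> hX hB.
suff : exists A, (W * A = A * W \/ W * A = - (A * W)) /\
   \prod_(i <- s) (X i * W) * (B * W ^+ r) = A * W ^+ (size s + r) by case=> A [_ e]; exists A.
elim: s => [|i s [A [hA e]]]; first by exists B; rewrite big_nil mul1r.
rewrite big_cons -mulrA e /= mulrA -(mulrA (X i)).
case: hA => hA; rewrite hA.
  exists (X i * A); split.
    by right; rewrite [in LHS]mulrA hX mulNr -[in LHS]mulrA hA [in LHS]mulrA.
  by rewrite mulrA -mulrA -exprS addSn.
exists (- (X i * A)); split.
  by left; rewrite [in LHS]mulrN [in LHS]mulrA hX mulNr opprK -[in LHS]mulrA hA mulrN [in LHS]mulrA mulNr.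
by rewrite mulrN !mulNr mulrA -mulrA -exprS addSn.
Qed.


Definition lo (phi : fvarT -> aform) (v : fvarT) := pi (filter (predC pu) (nfd v.1 (phi v))).
Definition hi (phi : fvarT -> aform) (v : fvarT) := pi (filter pu (nfd v.1 (phi v))).

Lemma hi_all (phi : fvarT -> aform) (v : fvarT) : all (fun m => (pu m == true) && (pv m == v.1)) (filter pu (nfd v.1 (phi v))).
Proof.
apply/allP => m; rewrite mem_filter => /andP[hm mL].
by move/allP: (nfd_all v.1 (phi v)) => /(_ _ mL) ->; rewrite andbT eqb_id.
Qed.

Lemma sp_hi phi v : sp true v.1 (hi phi v). Proof. by exists (filter pu (nfd v.1 (phi v))); rewrite hi_all. Qed.
Lemma sp_lo phi v : sp false v.1 (lo phi v).
Proof.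
exists (filter (predC pu) (nfd v.1 (phi v))); split => //; apply/allP => m; rewrite mem_filter => /andP[hm mL].
by move/allP: (nfd_all v.1 (phi v)) => /(_ _ mL) ->; rewrite andbT eqbF_neg.
Qed.

Lemma split_lohi phi v : graded_assign phi -> pi (phi v) = lo phi v + hi phi v.
Proof. by move=> g; rewrite graded_nfd // !pi_sum /lo /hi !pi_sum !big_filter [LHS](bigID pu) /= addrC. Qed.

Definition comQ (x y : Q) := x * y - y * x.
Definition acomQ (x y : Q) := x * y + y * x.
Lemma comQDl x1 x2 y : comQ (x1 + x2) y = comQ x1 y + comQ x2 y.
Proof. by rewrite /comQ mulrDl mulrDr opprD addrACA. Qed.
Lemma comQDr x y1 y2 : comQ x (y1 + y2) = comQ x y1 + comQ x y2.
Proof. by rewrite /comQ mulrDl mulrDr opprD addrACA. Qed.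
Lemma acomQDl x1 x2 y : acomQ (x1 + x2) y = acomQ x1 y + acomQ x2 y.
Proof. by rewrite /acomQ mulrDl mulrDr addrACA. Qed.
Lemma acomQDr x y1 y2 : acomQ x (y1 + y2) = acomQ x y1 + acomQ x y2.
Proof. by rewrite /acomQ mulrDl mulrDr addrACA. Qed.

Lemma comQ_c a b c d x y : sp a b x -> sp c d y -> (a && c) (+) (b && d) = false -> comQ x y = 0.
Proof. by move=> hx hy e; rewrite /comQ (comm_of hx hy e) subrr. Qed.
Lemma comQ_a a b c d x y : sp a b x -> sp c d y -> (a && c) (+) (b && d) = true -> comQ x y = (2%:R : K) *: (x * y).
Proof. by move=> hx hy e; rewrite /comQ (acomm_of hx hy e) opprK scaler_nat mulr2n. Qed.
Lemma acomQ_c a b c d x y : sp a b x -> sp c d y -> (a && c) (+) (b && d) = false -> acomQ x y = (2%:R : K) *: (x * y).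
Proof. by move=> hx hy e; rewrite /acomQ (comm_of hx hy e) scaler_nat mulr2n. Qed.
Lemma acomQ_a a b c d x y : sp a b x -> sp c d y -> (a && c) (+) (b && d) = true -> acomQ x y = 0.
Proof. by move=> hx hy e; rewrite /acomQ (acomm_of hx hy e) subrr. Qed.

Lemma comYZ a0 a1 u w : sp false false a0 -> sp true false a1 -> sp false true u -> sp true true w ->
  comQ (a0 + a1) (u + w) = ((2%:R : K) *: a1) * w.
Proof.
move=> h0 h1 hu hw; rewrite comQDl !comQDr (comQ_c h0 hu) // (comQ_c h0 hw) // (comQ_c h1 hu) //.
by rewrite (comQ_a h1 hw) // !add0r scalerAl.
Qed.

Lemma acomZZ u2 w2 u w : sp false true u2 -> sp true true w2 -> sp false true u -> sp true true w ->
  acomQ (u2 + w2) (u + w) = ((2%:R : K) *: w2) * w.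
Proof.
move=> hu2 hw2 hu hw; rewrite acomQDl !acomQDr (acomQ_a hu2 hu) // (acomQ_a hu2 hw) // (acomQ_a hw2 hu) //.
by rewrite (acomQ_c hw2 hw) // !add0r scalerAl.
Qed.

Lemma sqZ u w : sp false true u -> sp true true w -> (u + w) * (u + w) = w * w.
Proof.
move=> hu hw; rewrite mulDD (anti_sq hu) // add0r (acomm_of hu hw) //.
by rewrite addNKr.
Qed.

Lemma prod_nseq (F : fpoly K -> Q) n a : \prod_(r <- nseq n a) F r = F a ^+ n.
Proof. by elim: n => [|n IH]; rewrite ?big_nil ?expr0 //= big_cons IH exprS. Qed.

Lemma Wp0 phi : (hi phi (true, 1%N)) ^+ p = 0.
Proof. by apply: powp0; exact: (hi_all phi (true, 1%N)). Qed.

Lemma gen9 k n : (1 <= k)%N -> (2 * n + 2 * k - 1)%N = p ->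
  T2_E0sE0 (fmul (Defs.fprod [seq fcomm (y K i) (z K 1) | i <- iota 1 (2 * k - 2)])
                 (fmul (fcirc (z K 2) (z K 1)) (Defs.fprod (nseq (2 * n) (z K 1))))).
Proof.
move=> hk hp; apply/T2_evalP => phi g.
rewrite feval_mul feval_prod big_map feval_mul feval_circ feval_prod prod_nseq !feval_var.
set W := hi phi (true, 1%N).
have eZ := split_lohi (true, 1%N) g; have eZ2 := split_lohi (true, 2%N) g.
have hW : sp true true W := sp_hi phi (true, 1%N).
rewrite (eq_bigr (fun i => ((2%:R : K) *: hi phi (false, i)) * W)); last first.
  move=> i _; rewrite feval_comm !feval_var eZ (split_lohi (false, i) g).
  exact: (comYZ (sp_lo phi (false, i)) (sp_hi phi (false, i)) (sp_lo phi (true, 1%N)) hW).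
rewrite eZ eZ2 -/(acomQ _ _) (acomZZ (sp_lo phi (true, 2%N)) (sp_hi phi (true, 2%N)) (sp_lo phi (true, 1%N)) hW).
rewrite exprM expr2 (sqZ (sp_lo phi (true, 1%N)) hW) -expr2 -exprM -mulrA -exprS.
have hX : forall i, W * ((2%:R : K) *: hi phi (false, i)) = - (((2%:R : K) *: hi phi (false, i)) * W).
  by move=> i; apply: (acomm_of (spZ _ (sp_hi phi (false, i))) hW).
have hB : W * ((2%:R : K) *: hi phi (true, 2%N)) = ((2%:R : K) *: hi phi (true, 2%N)) * W.
  by apply: (comm_of (spZ _ (sp_hi phi (true, 2%N))) hW).
have [A ->] := @chain W _ (iota 1 (2 * k - 2)) _ _ (2 * n).+1 hX (or_introl hB).
rewrite size_iota; have -> : (2 * k - 2 + (2 * n).+1 = p)%N by rewrite -hp; lia.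
by rewrite Wp0 mulr0.
Qed.

Lemma gen10 k n : (1 <= k)%N -> (2 * n + 2 * k - 1)%N = p ->
  T2_E0sE0 (fmul (Defs.fprod [seq fcomm (y K i) (z K 1) | i <- iota 1 (2 * k - 1)])
                 (Defs.fprod (nseq (2 * n) (z K 1)))).
Proof.
move=> hk hp; apply/T2_evalP => phi g.
rewrite feval_mul feval_prod big_map feval_prod prod_nseq !feval_var.
set W := hi phi (true, 1%N).
have eZ := split_lohi (true, 1%N) g.
have hW : sp true true W := sp_hi phi (true, 1%N).
rewrite (eq_bigr (fun i => ((2%:R : K) *: hi phi (false, i)) * W)); last first.
  move=> i _; rewrite feval_comm !feval_var eZ (split_lohi (false, i) g).
  exact: (comYZ (sp_lo phi (false, i)) (sp_hi phi (false, i)) (sp_lo phi (true, 1%N)) hW).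
rewrite eZ exprM expr2 (sqZ (sp_lo phi (true, 1%N)) hW) -expr2 -exprM -[_ ^+ (2 * n)]mul1r.
have hX : forall i, W * ((2%:R : K) *: hi phi (false, i)) = - (((2%:R : K) *: hi phi (false, i)) * W).
  by move=> i; apply: (acomm_of (spZ _ (sp_hi phi (false, i))) hW).
have hB : W * 1 = 1 * W by rewrite mulr1 mul1r.
have [A ->] := @chain W _ (iota 1 (2 * k - 1)) _ _ (2 * n) hX (or_introl hB).
rewrite size_iota; have -> : (2 * k - 1 + 2 * n = p)%N by rewrite -hp; lia.
by rewrite Wp0 mulr0.
Qed.

End Power.

Theorem lemma13 (K : fieldType) (p : nat)
  (Kinf : forall s : seq K, exists x : K, x \notin s)
  (charK : p \in [pchar K]) (p_gt2 : (2 < p)%N) :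
  forall f : fpoly K, in_Ip p f -> T2_E0sE0 f.
Proof.
move=> f hf; apply: hf; first exact: T2_ideal.
move=> g; rewrite /Ip_gens.
case=> [->|[->|[->|[->|[->|[->|[[b1 [b4 ->]]|[->|[[k [n [hk hp ->]]]|[k [n [hk hp ->]]]]]]]]]]]].
- exact: gen1.
- exact: gen2.
- exact: gen3.
- exact: gen4.
- exact: gen5.
- exact: gen6.
- exact: gen7.
- exact: gen8.
- exact: (gen9 charK p_gt2 hk hp).
- exact: (gen10 charK p_gt2 hk hp).
Qed.
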